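(* Let $n$ be a positive integer and let $C$ be a connected component of $\Gamma(\mathsf{hypo}_n)$, with highest weight vertex $h$ and lowest weight vertex $l$. Then there is an automorphism of $C$ as an unlabelled undirected graph that maps $h$ to $l$.
   Context: Words are over the alphabet $\{1,\dots,n\}$. Quasi-Kashiwara operators for $1\le i\le n-1$: if a word $u$ contains a (not necessarily consecutive) subsequence $(i+1)\,i$, then $e_i(u)$ and $f_i(u)$ are undefined; otherwise $e_i(u)$ replaces the leftmost $i+1$ of $u$ by $i$ (undefined if there is no $i+1$) and $f_i(u)$ replaces the rightmost $i$ by $i+1$ (undefined if there is no $i$). $\Gamma(\mathsf{hypo}_n)$ is the directed graph with vertex set all words over $\{1,\dots,n\}$ and an edge $u\to f_i(u)$ labelled $i$ whenever $f_i(u)$ is defined. A highest weight vertex is one on which no $e_i$ is defined, and a lowest weight vertex is one on which no $f_i$ is defined; each connected component of $\Gamma(\mathsf{hypo}_n)$ has exactly one of each. *)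

(* Defs.v *)
From mathcomp Require Import all_boot.
From Stdlib Require Import Relations.
Set Implicit Arguments. Unset Strict Implicit. Unset Printing Implicit Defensive.

Definition word_on (n : nat) (u : seq nat) : bool := all (fun a => (0 < a <= n)) u.

Fixpoint has_pair (a b : nat) (u : seq nat) : bool :=
  match u with
  | [::] => false
  | x :: u' => ((x == a) && (b \in u')) || has_pair a b u'
  end.

(* position of the rightmost occurrence of x in u (meaningful when x \in u) *)
Definition rindex (x : nat) (u : seq nat) : nat := (size u).-1 - index x (rev u).

Definition e_op (i : nat) (u : seq nat) : option (seq nat) :=
  if has_pair i.+1 i u then None
  else if i.+1 \in u then Some (set_nth 0 u (index i.+1 u) i) else None.

Definition f_op (i : nat) (u : seq nat) : option (seq nat) :=
  if has_pair i.+1 i u then None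
  else if i \in u then Some (set_nth 0 u (rindex i u) i.+1) else None.

Definition hypo_edge (n : nat) (u v : seq nat) : Prop :=
  word_on n u /\ exists i, 1 <= i <= n.-1 /\ f_op i u = Some v.

Definition hypo_adj (n : nat) (u v : seq nat) : Prop :=
  hypo_edge n u v \/ hypo_edge n v u.

Definition hypo_conn (n : nat) : relation (seq nat) :=
  clos_refl_trans (seq nat) (hypo_adj n).

Definition highest_weight (n : nat) (u : seq nat) : Prop :=
  word_on n u /\ forall i, 1 <= i <= n.-1 -> e_op i u = None.

Definition lowest_weight (n : nat) (u : seq nat) : Prop :=
  word_on n u /\ forall i, 1 <= i <= n.-1 -> f_op i u = None.

(* Main.v *)
Require Import Defs.
From mathcomp Require Import all_boot zify.
From Stdlib Require Import Relations.
Set Implicit Arguments. Unset Strict Implicit. Unset Printing Implicit Defensive.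

Lemma has_pairP a b (s : seq nat) :
  reflect (exists q q', [/\ q < q' < size s, nth 0 s q = a & nth 0 s q' = b])
          (has_pair a b s).
Proof.
elim: s => [|c s IH] /=.
  by apply: ReflectF => -[q [q' [H _ _]]]; lia.
apply: (iffP orP).
  case.
    case/andP=> /eqP ca bs; exists 0, (index b s).+1; split => //=.
      by rewrite /= ltnS index_mem.
    by rewrite nth_index.
  by case/IH=> q [q' [H1 H2 H3]]; exists q.+1, q'.+1; split.
case=> [[|q]] [[|q']] [H1 H2 H3] //=.
  left; apply/andP; split; first by apply/eqP.
  by rewrite -H3 /= mem_nth //=; lia.
right; apply/IH; exists q, q'; split => //; lia.
Qed.

Lemma index_le (x : nat) (s : seq nat) i : i < size s -> nth 0 s i = x -> index x s <= i.
Proof.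
move=> Hi Hx; rewrite leqNgt; apply/negP => H.
have := before_find 0 H; rewrite /= Hx eqxx //.
Qed.

Lemma index_uniq_at (x : nat) (s : seq nat) p : p < size s -> nth 0 s p = x ->
  (forall q, q < size s -> nth 0 s q = x -> p <= q) -> index x s = p.
Proof.
move=> Hp Hx H; apply/eqP; rewrite eqn_leq index_le //=.
have xs : x \in s by rewrite -Hx mem_nth.
apply: H; [by rewrite index_mem | by rewrite nth_index].
Qed.

Lemma rindex_spec (x : nat) (s : seq nat) : x \in s ->
  [/\ rindex x s < size s, nth 0 s (rindex x s) = x &
      forall q, q < size s -> nth 0 s q = x -> q <= rindex x s].
Proof.
move=> xs; rewrite /rindex.
have xr : x \in rev s by rewrite mem_rev.
have Hj : index x (rev s) < size s by rewrite -(size_rev s) index_mem.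
have Hn : nth 0 s (size s - (index x (rev s)).+1) = x by rewrite -nth_rev // nth_index.
split; first by lia.
  by rewrite -[RHS]Hn; congr nth; lia.
move=> q Hq Hxq.
have : index x (rev s) <= size s - q.+1.
  apply: index_le; first by rewrite size_rev; lia.
  by rewrite nth_rev ?size_rev; [rewrite -Hxq; congr nth; lia | lia].
lia.
Qed.

Lemma rindex_uniq_at (x : nat) (s : seq nat) p : p < size s -> nth 0 s p = x ->
  (forall q, q < size s -> nth 0 s q = x -> q <= p) -> rindex x s = p.
Proof.
move=> Hp Hx H.
have xs : x \in s by rewrite -Hx mem_nth.
case: (rindex_spec xs) => H1 H2 H3.
apply/eqP; rewrite eqn_leq H3 // andbT; exact: H.
Qed.

Definition incr (u : seq nat) p := set_nth 0 u p (nth 0 u p).+1.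
Definition lt_std (u : seq nat) q p :=
  (nth 0 u q < nth 0 u p) || ((nth 0 u q == nth 0 u p) && (q < p)).
Definition samestd (u v : seq nat) :=
  size v = size u /\ forall q q', q < size u -> q' < size u -> lt_std u q q' = lt_std v q q'.

Lemma nth_incr u p q : nth 0 (incr u p) q = if q == p then (nth 0 u p).+1 else nth 0 u q.
Proof. by rewrite /incr nth_set_nth. Qed.

Lemma size_incr u p : p < size u -> size (incr u p) = size u.
Proof. by move=> H; rewrite /incr size_set_nth; lia. Qed.

Lemma word_onP n u : reflect (forall q, q < size u -> 0 < nth 0 u q <= n) (word_on n u).
Proof. exact: all_nthP. Qed.

Definition cond1 (u : seq nat) p := forall q, q < size u -> nth 0 u q = nth 0 u p -> q <= p.
Definition cond2 (u : seq nat) p := forall q, q < size u -> nth 0 u q = (nth 0 u p).+1 -> p < q.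

Lemma f_opE i u v : f_op i u = Some v <->
  exists p, [/\ p < size u, nth 0 u p = i, cond1 u p, cond2 u p & v = incr u p].
Proof.
split.
  rewrite /f_op; case E1: (has_pair i.+1 i u) => //; case E2: (i \in u) => // -[<-].
  case: (rindex_spec E2) => H1 H2 H3.
  exists (rindex i u); split => //.
  - by move=> q Hq; rewrite H2; exact: H3.
  - move=> q Hq; rewrite H2 => Hqi; rewrite ltnNge; apply/negP => Hle.
    have Hne : q != rindex i u by apply/eqP => E; move: Hqi; rewrite E H2; lia.
    move/negbT: E1 => /has_pairP; apply; exists q, (rindex i u); split => //; lia.
  - by rewrite /incr H2.
case=> p [Hp Hi c1 c2 ->].
rewrite /f_op.
have -> : has_pair i.+1 i u = false.
  apply/negbTE/has_pairP => -[q [q' [H1 H2 H3]]].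
  have := c1 q'; have := c2 q; rewrite Hi; lia.
have -> : i \in u by rewrite -Hi mem_nth.
rewrite (@rindex_uniq_at i u p) //; last by move=> q Hq Hq'; apply: c1; rewrite ?Hi.
by rewrite /incr Hi.
Qed.

Lemma incr_std u p : p < size u -> cond1 u p -> cond2 u p -> samestd u (incr u p).
Proof.
move=> Hp c1 c2; split; first exact: size_incr.
move=> q q' Hq Hq'; rewrite /lt_std !nth_incr.
have := c1 q Hq; have := c2 q Hq; have := c1 q' Hq'; have := c2 q' Hq'.
case: (q =P p) => [->|nq]; case: (q' =P p) => [->|nq'] /=; lia.
Qed.

Lemma std_incr_conds u p : p < size u -> samestd u (incr u p) -> cond1 u p /\ cond2 u p.
Proof.
move=> Hp [_ H]; split.
  move=> q Hq Hqi; case: (q =P p) => [->//|nq].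
  have := H q p Hq Hp; rewrite /lt_std !nth_incr eqxx (introF eqP nq); lia.
move=> q Hq Hqi; case: (q =P p) => [E|nq]; first by move: Hqi; rewrite E; lia.
have := H q p Hq Hp; rewrite /lt_std !nth_incr eqxx (introF eqP nq); lia.
Qed.

Lemma edge_incr n u v : hypo_edge n u v -> word_on n u /\
  exists p, [/\ p < size u, (nth 0 u p).+1 <= n, samestd u (incr u p) & v = incr u p].
Proof.
case=> Hw [i [Hi /f_opE [p [Hp Hpi c1 c2 ->]]]]; split => //.
exists p; split => //; first by lia.
exact: incr_std.
Qed.

Lemma incr_edge n u p : word_on n u -> p < size u -> (nth 0 u p).+1 <= n ->
  samestd u (incr u p) -> hypo_edge n u (incr u p).
Proof.
move=> Hw Hp Hn Hs; split => //.
have := (word_onP _ _ Hw) p Hp => Hb.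
case: (std_incr_conds Hp Hs) => c1 c2.
exists (nth 0 u p); split; first by lia.
apply/f_opE; exists p; split => //.
Qed.

Lemma word_on_incr n u p : word_on n u -> p < size u -> (nth 0 u p).+1 <= n ->
  word_on n (incr u p).
Proof.
move=> /word_onP Hw Hp Hn; apply/word_onP => q; rewrite size_incr // nth_incr => Hq.
case: (q =P p) => [_|_]; [lia | exact: Hw].
Qed.

Lemma edge_word n u v : hypo_edge n u v -> word_on n u /\ word_on n v.
Proof.
case/edge_incr => Hw [p [Hp Hn _ ->]]; split => //; exact: word_on_incr.
Qed.

Lemma f_e i a b : f_op i a = Some b -> e_op i b = Some a.
Proof.
case/f_opE => p [Hp Hi c1 c2 ->].
have Hs := size_incr Hp.
rewrite /e_op.
have -> : has_pair i.+1 i (incr a p) = false.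
  apply/negbTE/has_pairP => -[q [q' [H1 H2 H3]]].
  move: H2 H3; rewrite !nth_incr Hi.
  have := c1 q'; have := c2 q; rewrite Hi.
  case: (q =P p) => [E|nq]; case: (q' =P p) => [E'|nq'] /=; lia.
have -> : i.+1 \in incr a p.
  by apply/(nthP 0); exists p; rewrite ?Hs // nth_incr eqxx Hi.
rewrite (@index_uniq_at i.+1 (incr a p) p) ?Hs ?nth_incr ?eqxx ?Hi //.
  congr Some; apply: (@eq_from_nth _ 0).
    by rewrite size_set_nth Hs; lia.
  move=> q Hq; rewrite nth_set_nth /= nth_incr.
  by case: (q =P p) => [->|].
move=> q Hq; rewrite nth_incr; have := c2 q; rewrite Hi.
case: (q =P p) => [->|nq] /=; [lia | move=> H H'; apply/ltnW/H => //; lia].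
Qed.

Definition rk (u : seq nat) p := count (fun q => lt_std u q p) (iota 0 (size u)).
Definition pos (u : seq nat) k := find (fun p => rk u p == k) (iota 0 (size u)).
Definition gd (u : seq nat) k := pos u k.+1 < pos u k.
Definition G (u : seq nat) a b := count (gd u) (iota a (b - a)).
Definition xx (u : seq nat) k := nth 0 u (pos u k).

Lemma lt_irr u p : lt_std u p p = false.
Proof. rewrite /lt_std; lia. Qed.
Lemma lt_asym u p q : lt_std u p q -> lt_std u q p = false.
Proof. rewrite /lt_std; lia. Qed.
Lemma lt_trans u p q r : lt_std u p q -> lt_std u q r -> lt_std u p r.
Proof. rewrite /lt_std; lia. Qed.
Lemma lt_total u p q : p != q -> lt_std u p q || lt_std u q p.
Proof. rewrite /lt_std; lia. Qed.

Lemma count_strict (a b : pred nat) s x : (forall y, a y -> b y) -> x \in s -> b x -> ~~ a x ->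
  count a s < count b s.
Proof.
move=> ab; elim: s => [//|c s IH] /=; rewrite inE => /orP [/eqP ->|xs] bx nax.
  rewrite (negbTE nax) bx /= add0n add1n ltnS; exact: sub_count.
have := IH xs bx nax; case: (a c) (ab c) => [->//|_]; case: (b c) => /=; lia.
Qed.

Lemma rk_lt u p q : p < size u -> lt_std u p q -> rk u p < rk u q.
Proof.
move=> Hp H; apply: (count_strict (x := p)).
- by move=> y Hy; apply: lt_trans H.
- by rewrite mem_iota; lia.
- exact: H.
- by rewrite lt_irr.
Qed.

Lemma rk_ltn u p : p < size u -> rk u p < size u.
Proof.
move=> Hp; have E := count_predC (fun q => lt_std u q p) (iota 0 (size u)).
rewrite size_iota in E; rewrite /rk.
have : 0 < count (predC (fun q => lt_std u q p)) (iota 0 (size u)).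
  rewrite -has_count; apply/hasP; exists p; first by rewrite mem_iota; lia.
  by rewrite /= lt_irr.
lia.
Qed.

Lemma rk_mono u p q : p < size u -> q < size u -> (rk u p < rk u q) = lt_std u p q.
Proof.
move=> Hp Hq; apply/idP/idP; last exact: rk_lt.
case: (p =P q) => [->|/eqP npq]; first by lia.
case/orP: (lt_total u npq) => // H; have := rk_lt Hq H; lia.
Qed.

Lemma rk_inj u p q : p < size u -> q < size u -> rk u p = rk u q -> p = q.
Proof.
move=> Hp Hq E; apply/eqP; apply/negP => /negP npq.
case/orP: (lt_total u npq) => H; [have := rk_lt Hp H | have := rk_lt Hq H]; lia.
Qed.

Lemma rk_surj u k : k < size u -> exists2 p, p < size u & rk u p = k.
Proof.
move=> Hk.
have U : uniq (map (rk u) (iota 0 (size u))).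
  rewrite map_inj_in_uniq ?iota_uniq // => p q; rewrite !mem_iota => Hp Hq.
  apply: rk_inj; lia.
have S : {subset map (rk u) (iota 0 (size u)) <= iota 0 (size u)}.
  move=> x /mapP [p]; rewrite !mem_iota => Hp ->; have := @rk_ltn u p; lia.
have [_ E] := uniq_min_size U S (eq_leq (esym (size_map _ _))).
have : k \in iota 0 (size u) by rewrite mem_iota; lia.
rewrite -E => /mapP [p]; rewrite mem_iota => Hp ->; exists p => //; lia.
Qed.

Lemma pos_spec u k : k < size u -> pos u k < size u /\ rk u (pos u k) = k.
Proof.
move=> Hk; have [p Hp E] := rk_surj Hk.
have Hh : has (fun p => rk u p == k) (iota 0 (size u)).
  by apply/hasP; exists p; rewrite ?mem_iota ?E; [lia|].
have := Hh; rewrite has_find size_iota => Hf; split => //.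
have := nth_find 0 Hh; rewrite nth_iota ?size_iota //= add0n => /eqP //.
Qed.

Lemma pos_lt u k : k < size u -> pos u k < size u.
Proof. by case/pos_spec. Qed.
Lemma rk_pos u k : k < size u -> rk u (pos u k) = k.
Proof. by case/pos_spec. Qed.
Lemma pos_rk u p : p < size u -> pos u (rk u p) = p.
Proof.
move=> Hp; have Hk := rk_ltn Hp; apply: (rk_inj (pos_lt Hk) Hp); exact: rk_pos.
Qed.

Lemma G_nil u a : G u a a = 0.
Proof. by rewrite /G subnn. Qed.
Lemma G_split u a b c : a <= b -> b <= c -> G u a c = G u a b + G u b c.
Proof.
move=> ab bc; rewrite /G.
have -> : c - a = (b - a) + (c - b) by lia.
rewrite iotaD count_cat; congr (_ + count _ (iota _ _)); lia.
Qed.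
Lemma G_one u k : G u k k.+1 = gd u k.
Proof. by rewrite /G subSnn /= addn0. Qed.

Lemma xx_step u k : k.+1 < size u -> xx u k + gd u k <= xx u k.+1.
Proof.
move=> Hk; have Hk' : k < size u by lia.
have := rk_mono (pos_lt Hk') (pos_lt Hk); rewrite !rk_pos // ltnSn.
rewrite /lt_std /xx /gd; lia.
Qed.

Lemma xx_mono u k l : k <= l -> l < size u -> xx u k + G u k l <= xx u l.
Proof.
move=> kl; elim: l kl => [|l IH] kl Hl.
  have E : k = 0 by lia.
  by rewrite E G_nil addn0.
case: (k =P l.+1) => [->|nk]; first by rewrite G_nil addn0.
rewrite (@G_split u k l l.+1); try lia.
rewrite G_one; have := IH ltac:(lia) ltac:(lia); have := @xx_step u l Hl; lia.
Qed.

Lemma recon u w (y : nat -> nat) : size w = size u ->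
  (forall p, p < size u -> nth 0 w p = y (rk u p)) ->
  (forall k, k.+1 < size u -> y k + gd u k <= y k.+1) -> samestd u w.
Proof.
move=> Hs Hw Hy.
have Hkl : forall k l, k < l -> l < size u -> y k <= y l /\ (y k = y l -> pos u k < pos u l).
  move=> k l kl; elim: l kl => [//|l IH] kl Hl.
  have Pl := @rk_pos u l ltac:(lia); have Pl1 := @rk_pos u l.+1 Hl.
  have Hne : pos u l != pos u l.+1 by apply/eqP => E; move: Pl; rewrite E Pl1; lia.
  have := Hy l Hl; rewrite /gd.
  case: (k =P l) => [->|nk].
    lia.
  have := IH ltac:(lia) ltac:(lia); lia.
split => // p q Hp Hq; rewrite -rk_mono //.
have Hrp := rk_ltn Hp; have Hrq := rk_ltn Hq.
have Pp := pos_rk Hp; have Pq := pos_rk Hq.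
rewrite /lt_std !Hw //.
case: (ltngtP (rk u p) (rk u q)) => H.
- have := Hkl _ _ H Hrq; rewrite Pp Pq; lia.
- have := Hkl _ _ H Hrp; rewrite Pp Pq; lia.
- have E : p = q by apply: (rk_inj Hp Hq).
  rewrite E; lia.
Qed.

Lemma samestd_refl u : samestd u u.
Proof. by split. Qed.
Lemma samestd_sym u v : samestd u v -> samestd v u.
Proof. by case=> Hs H; split => // q q'; rewrite Hs => Hq Hq'; rewrite H. Qed.
Lemma samestd_trans u v w : samestd u v -> samestd v w -> samestd u w.
Proof.
case=> Hs H [Hs' H']; split; first by rewrite Hs'.
by move=> q q' Hq Hq'; rewrite H // H' // Hs.
Qed.

Lemma samestd_rk u v : samestd u v -> forall p, p < size u -> rk u p = rk v p.
Proof.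
case=> Hs H p Hp; rewrite /rk Hs; apply: eq_in_count => q; rewrite mem_iota => Hq.
apply: H => //; lia.
Qed.
Lemma samestd_pos u v : samestd u v -> forall k, pos u k = pos v k.
Proof.
move=> S k; have Hs := S.1; rewrite /pos Hs; apply: eq_in_find => p; rewrite mem_iota => Hp.
by rewrite (samestd_rk S) // -Hs; lia.
Qed.
Lemma samestd_gd u v : samestd u v -> forall k, gd u k = gd v k.
Proof. by move=> S k; rewrite /gd !(samestd_pos S). Qed.
Lemma samestd_G u v : samestd u v -> forall a b, G u a b = G v a b.
Proof. by move=> S a b; rewrite /G; apply: eq_count => k; rewrite (samestd_gd S). Qed.

Definition yv n (u : seq nat) k :=
  (n.+1 + G u 0 k) - (xx u ((size u).-1 - k) + G u ((size u).-1 - k) (size u).-1).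
Definition phi n (u : seq nat) := mkseq (fun p => yv n u (rk u p)) (size u).

Lemma size_phi n u : size (phi n u) = size u.
Proof. by rewrite size_mkseq. Qed.
Lemma nth_phi n u p : p < size u -> nth 0 (phi n u) p = yv n u (rk u p).
Proof. by move=> Hp; rewrite nth_mkseq. Qed.

Lemma xx_bnd n u j : word_on n u -> j < size u ->
  1 + G u 0 j <= xx u j /\ xx u j + G u j (size u).-1 <= n.
Proof.
move=> /word_onP Hw Hj.
have H0 : 0 < size u by lia.
have := @xx_mono u 0 j ltac:(lia) Hj; have := @xx_mono u j (size u).-1 ltac:(lia) ltac:(lia).
have := Hw _ (pos_lt H0); have := Hw _ (@pos_lt u (size u).-1 ltac:(lia)).
rewrite /xx; lia.
Qed.

Lemma Gtot u j : j <= (size u).-1 -> G u 0 (size u).-1 = G u 0 j + G u j (size u).-1.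
Proof. move=> Hj; apply: G_split; lia. Qed.

Lemma yv_bounds n u k : word_on n u -> k < size u -> 0 < yv n u k <= n.
Proof.
move=> Hw Hk; rewrite /yv.
have := xx_bnd Hw (ltac:(lia) : (size u).-1 - k < size u).
have := @Gtot u k ltac:(lia); have := @Gtot u ((size u).-1 - k) ltac:(lia).
lia.
Qed.

Lemma yv_step n u k : word_on n u -> k.+1 < size u -> yv n u k + gd u k <= yv n u k.+1.
Proof.
move=> Hw Hk; rewrite /yv.
set m := size u.
have E1 : m.-1 - k = (m.-1 - k.+1).+1 by rewrite /m; lia.
have := xx_bnd Hw (ltac:(lia) : m.-1 - k < size u).
have := xx_bnd Hw (ltac:(lia) : m.-1 - k.+1 < size u).
have := @xx_step u (m.-1 - k.+1) ltac:(rewrite /m; lia).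
have := @G_split u (m.-1 - k.+1) (m.-1 - k) m.-1 ltac:(lia) ltac:(lia).
have := @G_split u 0 k k.+1 ltac:(lia) ltac:(lia).
have Gj : G u (m.-1 - k.+1) (m.-1 - k) = gd u (m.-1 - k.+1) by rewrite E1 G_one.
rewrite G_one -E1.
have := @Gtot u k ltac:(rewrite /m; lia); have := @Gtot u (m.-1 - k) ltac:(rewrite /m; lia).
rewrite -/m; lia.
Qed.

Lemma phi_std n u : word_on n u -> samestd u (phi n u).
Proof.
move=> Hw; apply: (recon (y := yv n u)).
- exact: size_phi.
- by move=> p Hp; rewrite nth_phi.
- by move=> k Hk; apply: yv_step.
Qed.

Lemma phi_word n u : word_on n u -> word_on n (phi n u).
Proof.
move=> Hw; apply/word_onP => p; rewrite size_phi => Hp; rewrite nth_phi //.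
apply: yv_bounds => //; exact: rk_ltn.
Qed.

Lemma xx_phi n u k : word_on n u -> k < size u -> xx (phi n u) k = yv n u k.
Proof.
move=> Hw Hk; have S := phi_std Hw.
by rewrite /xx -(samestd_pos S) nth_phi ?pos_lt // rk_pos.
Qed.

Lemma phiK n u : word_on n u -> phi n (phi n u) = u.
Proof.
move=> Hw; have S := phi_std Hw.
apply: (@eq_from_nth _ 0); rewrite !size_phi // => p Hp.
rewrite nth_phi ?size_phi // -(samestd_rk S) //.
set k := rk u p.
have Hk : k < size u by apply: rk_ltn.
rewrite /yv size_phi -!(samestd_G S) xx_phi //; last by lia.
rewrite /yv.
have -> : (size u).-1 - ((size u).-1 - k) = k by lia.
have -> : nth 0 u p = xx u k by rewrite /xx /k pos_rk.
have := xx_bnd Hw Hk; have := xx_bnd Hw (ltac:(lia) : (size u).-1 - k < size u).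
have := @Gtot u k ltac:(lia); have := @Gtot u ((size u).-1 - k) ltac:(lia).
lia.
Qed.

Lemma phi_incr n u p : word_on n u -> p < size u -> (nth 0 u p).+1 <= n ->
  samestd u (incr u p) ->
  phi n u = incr (phi n (incr u p)) (pos u ((size u).-1 - rk u p)).
Proof.
move=> Hw Hp Hn S.
set v := incr u p; set p' := pos u _.
have Hv : word_on n v by apply: word_on_incr.
have Hsv : size v = size u by apply: size_incr.
have Hrp := rk_ltn Hp.
have Hp' : p' < size u by apply: pos_lt; lia.
have Xv : forall j, j < size u -> xx v j = xx u j + (j == rk u p).
  move=> j Hj; rewrite /xx -(samestd_pos S) /v nth_incr.
  have E : (pos u j == p) = (j == rk u p).
    apply/eqP/eqP => [<-|->]; [by rewrite rk_pos | by rewrite pos_rk].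
  rewrite E; case: eqP => [->|_]; by rewrite ?pos_rk ?addn1 ?addn0.
apply: (@eq_from_nth _ 0).
  by rewrite size_incr size_phi ?Hsv // size_phi Hsv.
move=> q; rewrite size_phi => Hq.
rewrite nth_incr nth_phi //.
have Eq : (q == p') = ((size u).-1 - rk u q == rk u p).
  have Hrq := rk_ltn Hq.
  apply/eqP/eqP => [->|E].
    by rewrite /p' rk_pos; lia.
  by rewrite /p' -(pos_rk Hq); congr pos; lia.
rewrite Eq.
have Hrq := rk_ltn Hq.
have Hj : (size u).-1 - rk u q < size u by lia.
have Bv := xx_bnd Hv (ltac:(rewrite Hsv; exact Hj) : (size u).-1 - rk u q < size v).
case: eqP => [E|NE].
- have Eqp : q = p' by apply/eqP; rewrite Eq E.
  rewrite -Eqp nth_phi ?Hsv // -(samestd_rk S) //.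
  rewrite /yv Hsv -!(samestd_G S) Xv // E eqxx.
  move: Bv; rewrite Hsv -!(samestd_G S) Xv // E eqxx; lia.
- rewrite nth_phi ?Hsv // -(samestd_rk S) //.
  rewrite /yv Hsv -!(samestd_G S) Xv //.
  by move/eqP/negbTE: NE => ->; rewrite addn0.
Qed.

Lemma adj_sym n u v : hypo_adj n u v -> hypo_adj n v u.
Proof. by case=> H; [right|left]. Qed.

Lemma adj_inv n u v : hypo_adj n u v -> word_on n u -> word_on n v /\ samestd u v.
Proof.
case=> H Hu.
  have [_ Hv] := edge_word H; case/edge_incr: H => _ [p [_ _ S E]].
  by split => //; rewrite E.
have [Hv _] := edge_word H; case/edge_incr: H => _ [p [_ _ S E]].
by split => //; rewrite E; exact: samestd_sym.
Qed.

Lemma conn_inv n x y : hypo_conn n x y -> word_on n x -> word_on n y /\ samestd x y.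
Proof.
elim=> {x y} [x y H|x|x y z _ IH1 _ IH2] Hx.
- exact: adj_inv.
- by split => //; apply: samestd_refl.
- case: (IH1 Hx) => Hy S1; case: (IH2 Hy) => Hz S2; split => //.
  exact: samestd_trans S1 S2.
Qed.

Lemma conn_sym n x y : hypo_conn n x y -> hypo_conn n y x.
Proof.
elim=> {x y} [x y H|x|x y z _ IH1 _ IH2].
- by apply: rt_step; apply: adj_sym.
- exact: rt_refl.
- exact: rt_trans IH2 IH1.
Qed.

Lemma edge_phi n u v : hypo_edge n u v -> hypo_edge n (phi n v) (phi n u).
Proof.
case/edge_incr => Hw [p [Hp Hn S ->]].
have Hv : word_on n (incr u p) by apply: word_on_incr.
rewrite (phi_incr Hw Hp Hn S).
set p' := pos u _.
have Hp' : p' < size u by apply: pos_lt; have := rk_ltn Hp; lia.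
have Hs : size (phi n (incr u p)) = size u by rewrite size_phi size_incr.
apply: incr_edge; rewrite ?Hs //.
- exact: phi_word.
- have := (word_onP _ _ (phi_word Hw)) p' ltac:(rewrite size_phi; exact Hp').
  by rewrite (phi_incr Hw Hp Hn S) nth_incr eqxx -/p'; lia.
- rewrite -(phi_incr Hw Hp Hn S).
  apply: samestd_trans (samestd_sym (phi_std Hv)) _.
  apply: samestd_trans (samestd_sym S) _.
  exact: phi_std.
Qed.

Lemma adj_phi n u v : hypo_adj n u v -> hypo_adj n (phi n u) (phi n v).
Proof. by case=> H; [right|left]; apply: edge_phi. Qed.

Lemma conn_phi n x y : hypo_conn n x y -> hypo_conn n (phi n x) (phi n y).
Proof.
elim=> {x y} [x y H|x|x y z _ IH1 _ IH2].
- by apply: rt_step; apply: adj_phi.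
- exact: rt_refl.
- exact: rt_trans IH1 IH2.
Qed.

Lemma lowest_no_incr n u p : lowest_weight n u -> p < size u -> (nth 0 u p).+1 <= n ->
  samestd u (incr u p) -> False.
Proof.
move=> [Hw Hl] Hp Hn S.
case: (incr_edge Hw Hp Hn S) => _ [i [Hi F]].
by rewrite Hl in F.
Qed.

Lemma lowest_le n u v p : lowest_weight n u -> word_on n v -> samestd u v ->
  p < size u -> nth 0 u p < nth 0 v p -> False.
Proof.
move=> Hl Hv S Hp Hlt.
pose Q k := (k < size u) && (nth 0 u (pos u k) < nth 0 v (pos u k)).
have exQ : exists k, Q k by exists (rk u p); rewrite /Q rk_ltn // pos_rk.
have ubQ : forall k, Q k -> k <= size u by move=> k /andP [H _]; lia.
case: (ex_maxnP exQ ubQ) => k0 /andP [Hk0 Hq0] Hmax.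
set p0 := pos u k0 in Hq0.
have Hp0 : p0 < size u by apply: pos_lt.
have Hrk0 : rk u p0 = k0 by apply: rk_pos.
have Key : forall q, q < size u -> lt_std u p0 q -> nth 0 v q <= nth 0 u q /\ lt_std v p0 q.
  move=> q Hq Hlq; split; last by rewrite -(S.2 _ _ Hp0 Hq).
  have := rk_lt Hp0 Hlq; rewrite Hrk0 => Hr.
  rewrite leqNgt; apply/negP => H.
  have : Q (rk u q) by rewrite /Q rk_ltn // pos_rk.
  by move/Hmax; lia.
have Hvb := (word_onP _ _ Hv) p0 ltac:(rewrite S.1; exact Hp0).
apply: (lowest_no_incr Hl Hp0); first by lia.
apply: incr_std => // q Hq Hqe.
- rewrite leqNgt; apply/negP => H.
  have := Key q Hq; rewrite /lt_std Hqe eqxx H orbT => /(_ isT).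
  rewrite /lt_std; lia.
- have := Key q Hq; rewrite /lt_std Hqe ltnSn => /(_ isT).
  lia.
Qed.

Lemma lowest_uniq n u v : lowest_weight n u -> lowest_weight n v -> samestd u v -> u = v.
Proof.
move=> Hu Hv S; apply: (@eq_from_nth _ 0); first by rewrite S.1.
move=> q Hq; case: (ltngtP (nth 0 u q) (nth 0 v q)) => // H.
- by case: (lowest_le Hu Hv.1 S Hq H).
- by case: (lowest_le Hv Hu.1 (samestd_sym S) (ltac:(rewrite S.1; exact Hq)) H).
Qed.

Theorem corollary4p8 (n : nat) (w h l : seq nat) :
  0 < n -> word_on n w ->
  hypo_conn n w h -> highest_weight n h ->
  hypo_conn n w l -> lowest_weight n l ->
  exists phi : seq nat -> seq nat,
    (forall u, hypo_conn n w u -> hypo_conn n w (phi u)) /\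
    (forall u v, hypo_conn n w u -> hypo_conn n w v -> phi u = phi v -> u = v) /\
    (forall v, hypo_conn n w v -> exists2 u, hypo_conn n w u & phi u = v) /\
    (forall u v, hypo_conn n w u -> hypo_conn n w v ->
       (hypo_adj n u v <-> hypo_adj n (phi u) (phi v))) /\
    phi h = l.
Proof.
move=> n0 Hw Cwh Hh Cwl Hl.
have [Hwh Swh] := conn_inv Cwh Hw.
have [Hwl Swl] := conn_inv Cwl Hw.
have Lph : lowest_weight n (phi n h).
  split; first exact: phi_word.
  move=> i Hi; case E: (f_op i (phi n h)) => [v|] //; exfalso.
  have Ed : hypo_edge n (phi n h) v by split; [exact: phi_word | exists i].
  case: (edge_phi Ed); rewrite phiK // => _ [j [Hj F]].
  by have := Hh.2 j Hj; rewrite (f_e F).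
have Phl : phi n h = l.
  apply: lowest_uniq Lph Hl _.
  apply: samestd_trans (samestd_sym (phi_std Hwh)) _.
  exact: samestd_trans (samestd_sym Swh) Swl.
have Cwpw : hypo_conn n w (phi n w).
  apply: rt_trans Cwl _; apply: conn_sym; rewrite -Phl; exact: conn_phi.
have Cphi : forall u, hypo_conn n w u -> hypo_conn n w (phi n u).
  by move=> u Cu; apply: rt_trans Cwpw (conn_phi Cu).
have Wd : forall u, hypo_conn n w u -> word_on n u by move=> u Cu; case: (conn_inv Cu Hw).
exists (phi n); split; [exact: Cphi|split; [|split; [|split]]] => //.
- move=> u v Cu Cv E; by rewrite -(phiK (Wd _ Cu)) E phiK // Wd.
- by move=> v Cv; exists (phi n v); [exact: Cphi | rewrite phiK // Wd].
- move=> u v Cu Cv; split; first exact: adj_phi.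
  by move/adj_phi; rewrite !phiK // Wd.
Qed.
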